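(* Consider any run of shadow moat growing on $(G,t)$ with final growth values $(y_S)$, and any tree $T$ in $G$ with leaf set $S'\subseteq V$. Then $$\mathrm{UM}(T)\ \ge\ c(T)-\sum_{S\subseteq V:\ S\odot S'} y_S .$$
   Context: $G=(V,E,c)$ is an undirected graph with edge costs $c\ge0$; $\delta(S)$ is the set of edges with exactly one endpoint in $S$; $c(T)=\sum_{e\in T}c_e$. Shadow moat growing on $(G,t)$, $t:V\to\mathbb{R}_{\ge0}$: continuous process in time maintaining a forest (initially empty), its components, and $y_S\ge0$ (initially $0$); at time $\tau$ a component $C$ is active iff some $w\in C$ has $t_w>\tau$, and each active $C$ increases $y_C$ at rate $1$; an edge $e$ between different components with $\sum_{S:e\in\delta(S)}y_S=c_e$ is added and the components merge; stop when nothing is active. In every run $\sum_{S:e\in\delta(S)}y_S\le c_e$ for all edges. For $S,A\subseteq V$, $S\odot A$ means $S\cap A\neq\emptyset$ and $A\not\subseteq S$. For a forest $F$: $\mathrm{UC}(F)=\sum_{e\in F}\big(c_e-\sum_{S:e\in\delta(S)}y_S\big)$; $\mathrm{MC}(F)=\sum_{S:\,|\delta(S)\cap F|\ge2}|\delta(S)\cap F|\,y_S$; $\mathrm{UM}(F)=\mathrm{UC}(F)+\mathrm{MC}(F)$. *)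

(* Defs.v *)
From mathcomp Require Import all_boot all_order all_algebra.
Set Implicit Arguments. Unset Strict Implicit. Unset Printing Implicit Defensive.
Import Order.TTheory GRing.Theory Num.Theory.
Local Open Scope ring_scope.

Section Graph.
(* An undirected (multi)graph: vertices V, edges E, each edge e has
   endpoints (ep e).1 and (ep e).2. *)
Variables (R : realFieldType) (V E : finType) (ep : E -> V * V).

Definition incident (e : E) (v : V) : bool := (v == (ep e).1) || (v == (ep e).2).

Definition cross (S : {set V}) (e : E) : bool := ((ep e).1 \in S) != ((ep e).2 \in S).

Definition adjF (F : {set E}) : rel V :=
  fun u v => [exists e in F, (ep e == (u, v)) || (ep e == (v, u))].

Definition compF (F : {set E}) (v : V) : {set V} := [set u | connect (adjF F) v u].

Definition is_comp (F : {set E}) (S : {set V}) : bool := [exists v, S == compF F v].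

Definition between_comps (F : {set E}) (e : E) : bool :=
  ~~ connect (adjF F) (ep e).1 (ep e).2.

Definition load (y : {set V} -> R) (e : E) : R := \sum_(S : {set V} | cross S e) y S.

Definition active (t : V -> R) (F : {set E}) (tau : R) (S : {set V}) : bool :=
  is_comp F S && [exists w in S, tau < t w].

(* Reachable states (forest F, duals y, time tau) of shadow moat growing on (G,t)
   with costs c.  The continuous process is described by its events:
   - add: an edge between different components that is tight is added;
   - grow: time advances by d > 0, every active component S increases y_S by d;
     allowed only when no tight edge between different components is pending,
     when no activity changes strictly inside (tau, tau+d) (no t_w there), and
     when no edge becomes overtight. *)
Inductive moat_reach (c : E -> R) (t : V -> R)
  : {set E} -> ({set V} -> R) -> R -> Prop :=
| moat_start : moat_reach c t set0 (fun _ => 0) 0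
| moat_add F y tau e :
    moat_reach c t F y tau -> between_comps F e -> load y e = c e ->
    moat_reach c t (e |: F) y tau
| moat_grow F y tau d :
    moat_reach c t F y tau -> 0 < d ->
    (forall e, between_comps F e -> load y e < c e) ->
    (forall w, ~ (tau < t w /\ t w < tau + d)) ->
    (forall e, load (fun S => y S + (if active t F tau S then d else 0)) e <= c e) ->
    moat_reach c t F (fun S => y S + (if active t F tau S then d else 0)) (tau + d).

Definition moat_run (c : E -> R) (t : V -> R) (F : {set E}) (y : {set V} -> R) (tau : R) :=
  moat_reach c t F y tau /\ forall S : {set V}, ~~ active t F tau S.

(* Trees in G, given by their edge set T (vertex set = endpoints of T;
   the empty edge set is a single-vertex tree). *)
Definition tvertices (T : {set E}) : {set V} := [set v | [exists e in T, incident e v]].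

Definition is_tree (T : {set E}) : Prop :=
  (forall u v, u \in tvertices T -> v \in tvertices T -> connect (adjF T) u v) /\
  (* acyclic: every edge of T is a bridge of T *)
  (forall e, e \in T -> ~~ connect (adjF (T :\ e)) (ep e).1 (ep e).2).

Definition leaves (T : {set E}) : {set V} :=
  [set v | #|[set e in T | incident e v]| == 1%N].

Definition odot (S A : {set V}) : bool := (S :&: A != set0) && ~~ (A \subset S).

Definition cost (c : E -> R) (F : {set E}) : R := \sum_(e in F) c e.

Definition UC (c : E -> R) (y : {set V} -> R) (F : {set E}) : R :=
  \sum_(e in F) (c e - load y e).

Definition MC (y : {set V} -> R) (F : {set E}) : R :=
  \sum_(S : {set V} | (2 <= #|[set e in F | cross S e]|)%N)
     (#|[set e in F | cross S e]|)%:R * y S.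

Definition UM (c : E -> R) (y : {set V} -> R) (F : {set E}) : R := UC c y F + MC y F.

End Graph.

(* Main.v *)
Require Import Defs.
From mathcomp Require Import all_boot all_order all_algebra.
From mathcomp Require Import zify ring lra.
Import Order.TTheory GRing.Theory Num.Theory.
Local Open Scope ring_scope.

Lemma adjF_sym (V E : finType) (ep : E -> V * V) (F : {set E}) :
  symmetric (adjF ep F).
Proof.
move=> u v; apply/existsP/existsP => -[e /andP[eF h]]; exists e;
by rewrite eF /= orbC.
Qed.

Lemma connect_inv (T : finType) (e e' : rel T) x :
  (forall u w, connect e x u -> e u w -> connect e' u w) ->
  forall y, connect e x y -> connect e' x y.
Proof.
move=> H y /connectP [p]; elim/last_ind: p y => [|p z IH] y /=.
  by move=> _ ->.
rewrite rcons_path last_rcons => /andP[pp ez] ->.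
apply: connect_trans (IH _ pp erefl) _.
apply: H ez; by apply/connectP; exists p.
Qed.

Lemma compFE (V E : finType) (ep : E -> V * V) F v u :
  (u \in compF ep F v) = connect (adjF ep F) v u.
Proof. by rewrite /compF inE. Qed.

Lemma leaf_in_comp (V E : finType) (ep : E -> V * V) (T : {set E}) :
  (forall e, e \in T -> ~~ connect (adjF ep (T :\ e)) (ep e).1 (ep e).2) ->
  forall n e0 a, e0 \in T -> incident ep e0 a ->
  (#|compF ep (T :\ e0) a| <= n)%N ->
  exists2 v, v \in compF ep (T :\ e0) a & #|[set e in T | incident ep e v]| == 1%N.
Proof.
move=> hbr; elim=> [|n IH] e0 a e0T ia hn.
  have H : a \in compF ep (T :\ e0) a by rewrite compFE connect0.
  by rewrite leqn0 cards_eq0 in hn; rewrite (eqP hn) inE in H.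
have [h1|hne] := eqVneq #|[set e in T | incident ep e a]| 1%N.
  by exists a; rewrite ?h1 // compFE connect0.
have /set0Pn [f] : [set e in T | incident ep e a] :\ e0 != set0.
  apply: contraNneq hne => h.
  by rewrite (cardsD1 e0) h cards0 inE e0T ia.
rewrite !inE => /andP[fne0 /andP[fT ifa]].
pose b := if (ep f).1 == a then (ep f).2 else (ep f).1.
have hf : (ep f == (a, b)) || (ep f == (b, a)).
  move: ifa; rewrite /b /incident; case: (ep f) => p q /=.
  case: (eqVneq p a) => [->|pa] /=; first by rewrite eqxx.
  by move=> /eqP ->; rewrite eqxx orbT.
have hab : ~~ connect (adjF ep (T :\ f)) b a.
  have := hbr f fT; case/orP: (hf) => /eqP -> //=.
  by rewrite (sym_connect_sym (adjF_sym _ _ _ _)).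
have ibf : incident ep f b.
  by rewrite /incident; case/orP: (hf) => /eqP -> /=; rewrite eqxx ?orbT.
have sub : compF ep (T :\ f) b \subset compF ep (T :\ e0) a.
  apply/subsetP => u; rewrite !compFE => hu.
  have adjab : adjF ep (T :\ e0) a b.
    by apply/existsP; exists f; rewrite !inE fne0 fT hf.
  apply: connect_trans (connect1 adjab) _.
  apply: connect_inv hu => w z hbw /existsP [g /andP[]].
  rewrite !inE => /andP[gf gT] hg.
  apply: connect1; apply/existsP; exists g; rewrite !inE gT hg !andbT.
  apply/eqP => ge.
  have hg' := hg; rewrite ge in hg'.
  have haw : (a == w) || (a == z).
    move: ia hg'; rewrite /incident; case: (ep e0) => p q /=.
    by case/orP => /eqP-> ; case/orP => /eqP[? ?]; subst; rewrite eqxx ?orbT.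
  case/orP: haw => /eqP ea; apply: (negP hab).
    by rewrite ea.
  apply: connect_trans hbw (connect1 _); rewrite ea.
  by apply/existsP; exists g; rewrite !inE gf gT hg.
have lt : (#|compF ep (T :\ f) b| < #|compF ep (T :\ e0) a|)%N.
  apply: proper_card; rewrite properE sub /=.
  apply/subsetPn; exists a; rewrite !compFE ?connect0 //.
have [|v hv hl] := IH f b fT ibf; first by rewrite -ltnS; apply: leq_trans lt hn.
by exists v => //; apply: (subsetP sub).
Qed.

Lemma moat_y_ge0 {R : realFieldType} {V E : finType} {ep : E -> V * V}
  {c : E -> R} {t : V -> R} {F y tau} :
  moat_reach ep c t F y tau -> forall S, 0 <= y S.
Proof.
elim=> [S|//|F' y' tau' d _ IH d0 _ _ _ S] /=; first by [].
by rewrite addr_ge0 //; case: ifP => // _; rewrite ltW.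
Qed.

Lemma one_cross_odot (V E : finType) (ep : E -> V * V) (T : {set E}) (S : {set V}) :
  is_tree ep T -> #|[set e in T | cross ep S e]| == 1%N -> odot S (leaves ep T).
Proof.
move=> [_ hbr] /cards1P [e0 he0].
have : e0 \in [set e in T | cross ep S e] by rewrite he0 set11.
rewrite inE => /andP[e0T ce0].
have cl : closed (adjF ep (T :\ e0)) (mem S).
  move=> u w /existsP [g /andP[]]; rewrite !inE => /andP[ge gT] hg.
  have ncg : ~~ cross ep S g.
    apply: contra ge => cg.
    have : g \in [set e in T | cross ep S e] by rewrite inE gT cg.
    by rewrite he0 inE.
  move: ncg; rewrite /cross negbK => /eqP.
  by case/orP: hg => /eqP -> /=.
have i1 : incident ep e0 (ep e0).1 by rewrite /incident eqxx.
have i2 : incident ep e0 (ep e0).2 by rewrite /incident eqxx orbT.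
have [v1 hv1 l1] := @leaf_in_comp _ _ ep T hbr _ e0 _ e0T i1 (leqnn _).
have [v2 hv2 l2] := @leaf_in_comp _ _ ep T hbr _ e0 _ e0T i2 (leqnn _).
rewrite compFE in hv1; rewrite compFE in hv2.
have s1 := closed_connect cl hv1; have s2 := closed_connect cl hv2.
rewrite ?inE in s1 s2.
have L1 : v1 \in leaves ep T by rewrite inE.
have L2 : v2 \in leaves ep T by rewrite inE.
move: ce0; rewrite /cross s1 s2.
case h1 : (v1 \in S); case h2 : (v2 \in S) => //= _.
  apply/andP; split.
    by apply/set0Pn; exists v1; rewrite inE h1 L1.
  by apply/subsetPn; exists v2; rewrite ?h2.
apply/andP; split.
  by apply/set0Pn; exists v2; rewrite inE h2 L2.
by apply/subsetPn; exists v1; rewrite ?h1.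
Qed.

Theorem mainTheorem11 (R : realFieldType) (V E : finType) (ep : E -> V * V)
  (c : E -> R) (hc : forall e, 0 <= c e) (t : V -> R) (ht : forall v, 0 <= t v)
  (F : {set E}) (y : {set V} -> R) (tau : R)
  (hrun : moat_run ep c t F y tau)
  (T : {set E}) (hT : is_tree ep T) :
  cost c T - \sum_(S : {set V} | odot S (leaves ep T)) y S <= UM ep c y T.
Proof.
have y0 := moat_y_ge0 (proj1 hrun).
rewrite /UM /UC /MC /cost sumrB.
have -> : \sum_(e in T) load ep y e =
    \sum_(S : {set V}) (#|[set e in T | cross ep S e]|)%:R * y S.
  rewrite /load; under eq_bigr do rewrite big_mkcond /=.
  rewrite exchange_big /=; apply: eq_bigr => S _.
  rewrite -big_mkcondr /= (eq_bigl (mem [set e in T | cross ep S e])) ?sumr_const ?mulr_natl //.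
  by move=> e /=; rewrite inE.
pose k S := #|[set e in T | cross ep S e]|.
have -> : \sum_S (k S)%:R * y S = \sum_(S | (2 <= k S)%N) (k S)%:R * y S
    + \sum_(S | ~~ (2 <= k S)%N) (k S)%:R * y S.
  by rewrite (bigID (fun S => (2 <= k S)%N)).
set A := \sum_(S | (2 <= k S)%N) _.
set B := \sum_(S | ~~ (2 <= k S)%N) _.
set O := \sum_(S | odot S _) _.
rewrite [X in _ <= X](_ : _ = \sum_(e in T) c e - B); last by ring.
rewrite lerD2l lerN2.
rewrite /B /O big_mkcond [X in _ <= X]big_mkcond /=; apply: ler_sum => S _.
case: ifP => hk; case: ifP => ho //; try exact: y0;
  move: hk; case kS: (k S) => [|[|n]] //= _; rewrite ?mul0r ?mul1r ?y0 //;
  by move: ho; rewrite one_cross_odot // -/(k S) kS.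
Qed.
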